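(* (i) There exists a non-commutative semiring $S$ (with identity) which is additively cancellative, reduced, centrally essential, and has no non-zero zero-divisors. (ii) Let $S$ be an additively cancellative reduced semiring and let $D(S)$ be its ring of differences. Then $S$ is commutative if and only if $D(S)$ is a centrally essential ring.
   Context: A semiring is a set $S$ with two binary operations $+$ and $\cdot$ such that $(S,+)$ is a commutative monoid with neutral element $0$, $(S,\cdot)$ is a monoid with identity $1$, multiplication distributes over addition on both sides, and $0s=s0=0$ for all $s\in S$ (i.e. an associative ring with $1$ except that additive inverses need not exist). The center of $S$ is $C(S)=\{s\in S: ss'=s's \text{ for all } s'\in S\}$. $S$ is centrally essential if for every non-zero $x\in S$ there exist non-zero $y,z\in C(S)$ with $xy=z$ (for rings this is the same definition). $S$ is reduced if for all $x,y\in S$, $x^2+y^2=xy+yx$ implies $x=y$. $S$ is additively cancellative if $x+z=y+z$ implies $x=y$ for all $x,y,z\in S$. An additively cancellative semiring $S$ embeds as a subsemiring in a ring $D(S)$, its ring of differences, in which every element has the form $x-y$ with $x,y\in S$; $D(S)$ is unique up to isomorphism over $S$. An element $a\in S$ is a left zero-divisor if $ab=0$ for some non-zero $b\in S$ (right zero-divisors analogously); ''without zero-divisors'' means there are no non-zero zero-divisors. *)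

(* Defs.v *)
From HB Require Import structures.
From mathcomp Require Import all_boot all_order all_algebra.
Set Implicit Arguments. Unset Strict Implicit. Unset Printing Implicit Defensive.
Import GRing.Theory.
Local Open Scope ring_scope.

(* Semirings (with identity, 0 absorbing, 0 = 1 allowed) are MathComp's
   pzSemiRingType; rings are pzRingType (which coerce to pzSemiRingType). *)

Definition central (S : pzSemiRingType) (s : S) : Prop :=
  forall s' : S, s * s' = s' * s.

Definition centrally_essential (S : pzSemiRingType) : Prop :=
  forall x : S, x <> 0 ->
    exists y z : S, [/\ central y, central z, y <> 0, z <> 0 & x * y = z].

Definition reduced (S : pzSemiRingType) : Prop :=
  forall x y : S, x ^+ 2 + y ^+ 2 = x * y + y * x -> x = y.

Definition add_cancellative (S : pzSemiRingType) : Prop :=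
  forall x y z : S, x + z = y + z -> x = y.

Definition commutative_sr (S : pzSemiRingType) : Prop :=
  forall x y : S, x * y = y * x.

Definition no_zero_divisors (S : pzSemiRingType) : Prop :=
  forall a b : S, a * b = 0 -> a = 0 \/ b = 0.

Definition ring_of_differences (S : pzSemiRingType) (R : pzRingType)
  (f : {rmorphism S -> R}) : Prop :=
  injective f /\ forall r : R, exists x y : S, r = f x - f y.

(* Main.v *)
Require Import Defs.
From HB Require Import structures.
From mathcomp Require Import all_boot all_order all_algebra ring lra zify.
Set Implicit Arguments. Unset Strict Implicit. Unset Printing Implicit Defensive.
Import GRing.Theory Num.Theory.
Local Open Scope ring_scope.
Definition quat := (int * int * int * int)%type.
Definition qadd (p q : quat) : quat :=
  let: (a1,b1,c1,d1) := p in let: (a2,b2,c2,d2) := q in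
  (a1+a2, b1+b2, c1+c2, d1+d2).
Definition qmul (p q : quat) : quat :=
  let: (a1,b1,c1,d1) := p in let: (a2,b2,c2,d2) := q in
  (a1*a2 - b1*b2 - c1*c2 - d1*d2, a1*b2 + b1*a2 + c1*d2 - d1*c2,
   a1*c2 - b1*d2 + c1*a2 + d1*b2, a1*d2 + b1*c2 - c1*b2 + d1*a2).
Definition q0 : quat := (0,0,0,0).
Definition q1 : quat := (1,0,0,0).

Ltac qdes := repeat match goal with [ p : quat |- _ ] => case: p => [[[? ?] ?] ?] end.
Ltac qsolve := intros; qdes; rewrite /qadd /qmul /q0 /q1 /=; congr (_,_,_,_); ring.

Lemma qaddA p q r : qadd p (qadd q r) = qadd (qadd p q) r. Proof. qsolve. Qed.
Lemma qaddC p q : qadd p q = qadd q p. Proof. qsolve. Qed.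
Lemma qmulA p q r : qmul p (qmul q r) = qmul (qmul p q) r. Proof. qsolve. Qed.
Lemma qmulDl p q r : qmul (qadd p q) r = qadd (qmul p r) (qmul q r). Proof. qsolve. Qed.
Lemma qmulDr p q r : qmul r (qadd p q) = qadd (qmul r p) (qmul r q). Proof. qsolve. Qed.
Lemma qmul1 p : qmul p q1 = p. Proof. qsolve. Qed.
Lemma q1mul p : qmul q1 p = p. Proof. qsolve. Qed.
Lemma qmul0 p : qmul p q0 = q0. Proof. qsolve. Qed.
Lemma q0mul p : qmul q0 p = q0. Proof. qsolve. Qed.
Lemma qaddI p q r : qadd p r = qadd q r -> p = q.
Proof. qdes; rewrite /qadd => -[]. move=> /addIr -> /addIr -> /addIr -> /addIr -> //. Qed.

Lemma qred p q : qadd (qmul p p) (qmul q q) = qadd (qmul p q) (qmul q p) -> p = q.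
Proof.
case: p => [[[a b] c] d]; case: q => [[[a' b'] c'] d']; rewrite /qadd /qmul => -[].
move=> h1 h2 h3 h4.
have e1 : (a-a')*(b-b') = 0 by lia.
have e2 : (a-a')*(c-c') = 0 by lia.
have e3 : (a-a')*(d-d') = 0 by lia.
have e4 : (a-a')^+2 = (b-b')^+2 + (c-c')^+2 + (d-d')^+2 by rewrite !expr2; lia.
have ha : a = a'.
  case: (eqVneq (a-a') 0) => [/eqP|ne]; first by rewrite subr_eq0 => /eqP.
  exfalso.
  move: e1 e2 e3 => /eqP + /eqP + /eqP; rewrite !mulf_eq0 (negbTE ne) /= !subr_eq0 => /eqP eb /eqP ec /eqP ed.
  move: e4; rewrite eb ec ed !subrr; idtac => /eqP; rewrite expf_eq0 /=.
  by rewrite (negbTE ne).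
subst a'; move: e4; rewrite subrr expr0n /= => /eqP.
rewrite eq_sym -addrA paddr_eq0 ?sqr_ge0 ?addr_ge0 // ?paddr_eq0 ?sqr_ge0 //.
by rewrite !sqrf_eq0 !subr_eq0 => /and3P [/eqP -> /eqP -> /eqP ->].
Qed.
Arguments qmul : simpl never.
Arguments qadd : simpl never.
Global Opaque q1 q0.
Definition SS := option (nat * quat).
HB.instance Definition _ := Choice.on SS.

Definition sadd (x y : SS) : SS :=
  match x, y with
  | None, _ => y
  | _, None => x
  | Some (n, q), Some (m, p) => Some ((n + m).+1, qadd q p)
  end.
Definition smul (x y : SS) : SS :=
  match x, y with
  | Some (n, q), Some (m, p) => Some ((n * m + n + m)%N, qmul q p)
  | _, _ => None
  end.
Definition s0 : SS := None.
Definition s1 : SS := Some (0%N, q1).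

Ltac sdes := repeat match goal with [ x : SS |- _ ] => case: x => [[? ?]|] end.
Ltac ssolve := rewrite /associative /commutative /left_id /right_id /left_distributive /right_distributive; intros; sdes; rewrite /sadd /smul /s0 /s1 //=;
  try (congr Some; congr pair; try lia).

Lemma saddA : associative sadd. Proof. ssolve; apply: qaddA. Qed.
Lemma saddC : commutative sadd. Proof. ssolve; apply: qaddC. Qed.
Lemma sadd0 : left_id s0 sadd. Proof. by case. Qed.
Lemma smulA : associative smul. Proof. ssolve; apply: qmulA. Qed.
Lemma smul1 : left_id s1 smul. Proof. ssolve; apply: q1mul. Qed.
Lemma smulr1 : right_id s1 smul. Proof. ssolve; apply: qmul1. Qed.
Lemma smulDl : left_distributive smul sadd. Proof. ssolve; apply: qmulDl. Qed.
Lemma smulDr : right_distributive smul sadd. Proof. ssolve; apply: qmulDr. Qed.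
Lemma smul0 : left_zero s0 smul. Proof. by []. Qed.
Lemma smulr0 : right_zero s0 smul. Proof. by case=> [[]|]. Qed.

HB.instance Definition _ := GRing.isPzSemiRing.Build SS
  saddA saddC sadd0 smulA smul1 smulr1 smulDl smulDr smul0 smulr0.
Lemma SS_add (x y : SS) : x + y = sadd x y. Proof. by []. Qed.
Lemma SS_mul (x y : SS) : x * y = smul x y. Proof. by []. Qed.
Lemma SS_0 : (0 : SS) = None. Proof. by []. Qed.

Lemma part1 : exists S : pzSemiRingType,
      ~ commutative_sr S /\ add_cancellative S /\ reduced S /\
      centrally_essential S /\ no_zero_divisors S.
Proof.
exists SS; split; [|split; [|split; [|split]]].
- move=> /(_ (Some (0%N, (0,1,0,0))) (Some (0%N, (0,0,1,0)))).
  rewrite !SS_mul /smul /qmul /= => -[] /eqP.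
  by rewrite !(mul0r, mulr0, mul1r, mulr1, subr0, sub0r, addr0, add0r).
- move=> x y z; rewrite !SS_add.
  case: z => [[k r]|]; last by rewrite /sadd; case: x => [[]|]; case: y => [[]|].
  case: x => [[n q]|]; case: y => [[m p]|] //=; rewrite /sadd.
  + by case=> h /qaddI ->; congr (Some (_,_)); lia.
  + by case; lia.
  + by case; lia.
- move=> x y; rewrite !expr2 !SS_add !SS_mul.
  case: x => [[n q]|]; case: y => [[m p]|] //=; rewrite /sadd /smul //.
  case=> h /qred ->; congr (Some (_, _)); nia.
- move=> x; case: x => [[n q]|] // _.
  exists (Some (0%N, q0)), (Some (n, q0)); split => //.
  + by case=> [[m p]|] //; rewrite !SS_mul /smul qmul0 q0mul; congr (Some (_,_)); lia.
  + by case=> [[m p]|] //; rewrite !SS_mul /smul qmul0 q0mul; congr (Some (_,_)); lia.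
  + by rewrite SS_mul /smul qmul0; congr (Some (_,_)); lia.
- move=> a b; rewrite SS_mul SS_0.
  by case: a => [[n q]|]; case: b => [[m p]|]; auto.
Qed.
Lemma centralM (S : pzSemiRingType) (x y : S) :
  central x -> central y -> central (x * y).
Proof. by move=> cx cy s; rewrite -mulrA cy mulrA cx mulrA. Qed.

Lemma central1 (S : pzSemiRingType) : central (1 : S).
Proof. by move=> s; rewrite mul1r mulr1. Qed.

Lemma zmod4 (V : zmodType) (a b c d : V) : a + d - (b + c) = a - b - (c - d).
Proof. by rewrite opprB opprD !addrA (addrAC a d). Qed.

Lemma zmod5 (V : zmodType) (a b c d : V) : a - b - (c - d) = a - c - (b - d).
Proof. by rewrite !opprB !addrA [LHS]addrAC [RHS]addrAC (addrAC a (-b)). Qed.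

Lemma ce_comm (R : pzRingType) : (forall r : R, r * r = 0 -> r = 0) ->
  centrally_essential R -> forall a b : R, a * b = b * a.
Proof.
move=> red ce a b; apply/eqP; rewrite -subr_eq0; apply/eqP.
set w := a * b - b * a.
case: (eqVneq w 0) => [//|wn0]; exfalso.
have wn : w <> 0 by apply/eqP.
have [y' [z' [cy cz y0 z0 wy]]] := ce w wn.
have key : forall c, central c ->
    w * (z' * c) = a * (z' * c) * b - b * (a * (z' * c)).
  move=> c cc; rewrite /w mulrBl -!mulrA.
  by rewrite (mulrA z' c b) -(centralM cz cc b).
have sq : forall c, central c -> w * (z' * c) = 0 -> z' * c = 0.
  move=> c cc h; apply: red.
  rewrite -{1}wy -!mulrA (mulrA y' c) -(centralM cz cc (y' * c)).
  by rewrite mulrA h mul0r.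
case: (eqVneq (a * z') 0) => [hz|hn].
  have := sq 1 (@central1 R); rewrite !mulr1 => H.
  by apply: z0; apply: H; move: (key 1 (@central1 R)); rewrite !mulr1 hz mul0r mulr0 subr0.
have hn' : a * z' <> 0 by apply/eqP.
have [c [v [cc cv c0 v0 hv]]] := ce _ hn'.
apply: v0; rewrite -hv -mulrA (sq c cc) ?mulr0 //.
by rewrite key // mulrA hv cv subrr.
Qed.

Lemma part2 (S : pzSemiRingType) (R : pzRingType) (f : {rmorphism S -> R}) :
  add_cancellative S -> reduced S -> ring_of_differences f ->
  (commutative_sr S <-> centrally_essential R).
Proof.
move=> _ redS [finj fsurj].
have redR : forall r : R, r * r = 0 -> r = 0.
  move=> r; have [x [y ->]] := fsurj r => h.
  have: x ^+ 2 + y ^+ 2 = x * y + y * x.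
    apply: finj; apply/eqP; rewrite -subr_eq0 !expr2 !rmorphD !rmorphM; apply/eqP.
    by rewrite -h mulrBl !mulrBr zmod4.
  by move/redS ->; rewrite subrr.
split.
- move=> cS.
  have cR : forall r s : R, r * s = s * r.
    move=> r s; have [a [b ->]] := fsurj r; have [c [d ->]] := fsurj s.
    by rewrite !mulrBl !mulrBr -!rmorphM (cS a c) (cS a d) (cS b c) (cS b d) zmod5.
  move=> x x0; exists 1, x; split => //; try by move=> s; rewrite cR.
  by move=> h10; apply: x0; rewrite -[x]mulr1 h10 mulr0.
  by rewrite mulr1.
- move=> ce x y; apply: finj; rewrite !rmorphM; exact: ce_comm.
Qed.

Theorem theorem1p2 :
  (exists S : pzSemiRingType,
      ~ commutative_sr S /\ add_cancellative S /\ reduced S /\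
      centrally_essential S /\ no_zero_divisors S)
  /\
  (forall (S : pzSemiRingType) (R : pzRingType) (f : {rmorphism S -> R}),
      add_cancellative S -> reduced S -> ring_of_differences f ->
      (commutative_sr S <-> centrally_essential R)).
Proof. split; [exact: part1 | exact: part2]. Qed.
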